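(* Let $\xi\in\mathcal N_{\rm pol}$ with $0\in\xi$, and let $\ell>0$. Suppose $\xi\cap K_\ell(z)\ne\emptyset$ for every $z\in I$. Then $D(0|\xi)\subset B_{6\ell d^2}(0)$.
   Context: $\mathcal N$ is the set of locally finite subsets of $\mathbb R^d$; for $x\in\xi$, $\mathrm{Vor}(x|\xi)=\{y:|y-x|\le|y-z|\ \forall z\in\xi\}$; $\mathcal N_{\rm pol}$ is the set of $\xi\in\mathcal N$ all of whose Voronoi cells are convex polytopes. For $\xi\in\mathcal N_{\rm pol}$ and $x\in\xi$, the fundamental region $D(x|\xi)$ is the union of the closed balls centered at $v$ with radius $|v-x|$, as $v$ ranges over the vertices of $\mathrm{Vor}(x|\xi)$. $B_r(0)$ is the closed Euclidean ball of radius $r$ centered at $0$. $I:=\{z\in\mathbb Z^d:|z|_\infty=d\}$ and $K_\ell(z):=z\ell+[-\ell/2,\ell/2]^d$. *)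

(* Defs.v *)
From HB Require Import structures.
From mathcomp Require Import all_boot all_order all_algebra.
From mathcomp Require Import classical_sets cardinality reals.
Set Implicit Arguments. Unset Strict Implicit. Unset Printing Implicit Defensive.
Import Order.TTheory GRing.Theory Num.Theory.
Local Open Scope ring_scope.
Local Open Scope classical_set_scope.

Section Defs.
Variables (R : realType) (d : nat).
Notation pt := 'rV[R]_d.

Definition enorm (x : pt) : R := Num.sqrt (\sum_(i < d) (x ord0 i) ^+ 2).
Definition edist (x y : pt) : R := enorm (x - y).

Definition ball0 (r : R) : set pt := [set y | enorm y <= r].

Definition locally_finite (xi : set pt) : Prop :=
  forall r : R, finite_set (xi `&` ball0 r).

Definition Vor (x : pt) (xi : set pt) : set pt :=
  [set y | forall z, xi z -> edist y x <= edist y z].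

Definition is_polytope (C : set pt) : Prop :=
  exists s : seq pt, C = [set y | exists w : 'I_(size s) -> R,
     [/\ (forall i, 0 <= w i), \sum_i w i = 1 & y = \sum_i w i *: s`_i]].

Definition is_vertex (C : set pt) (v : pt) : Prop :=
  C v /\ forall a b t, C a -> C b -> 0 < t -> t < 1 ->
    v = (1 - t) *: a + t *: b -> a = b.

Definition Npol (xi : set pt) : Prop :=
  locally_finite xi /\ forall x, xi x -> is_polytope (Vor x xi).

Definition fund_region (x : pt) (xi : set pt) : set pt :=
  [set y | exists v, is_vertex (Vor x xi) v /\ edist y v <= edist v x].

Definition supnormZ (z : 'rV[int]_d) : nat := (\max_(i < d) `|z ord0 i|%N)%N.
Definition Iset : set 'rV[int]_d := [set z | supnormZ z = d].

Definition cube (l : R) (z : 'rV[int]_d) : set pt :=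
  [set y | forall i, `|y ord0 i - (z ord0 i)%:~R * l| <= l / 2].
End Defs.

(* Main.v *)
Require Import Defs.
From HB Require Import structures.
From mathcomp Require Import all_boot all_order all_algebra.
From mathcomp Require Import classical_sets cardinality reals.
From mathcomp Require Import lra.
Import Order.TTheory GRing.Theory Num.Theory.
Local Open Scope ring_scope.
Local Open Scope classical_set_scope.

Set Implicit Arguments. Unset Strict Implicit.
Section Aux.
Variables (R : realType) (d : nat).
Notation pt := 'rV[R]_d.
Definition SS (x : pt) : R := \sum_(i < d) (x ord0 i) ^+ 2.

Lemma SS_ge0 (x : pt) : 0 <= SS x.
Proof. by apply: sumr_ge0 => i _; rewrite sqr_ge0. Qed.

Lemma edist_le (a b c e : pt) : edist a b <= edist c e -> SS (a - b) <= SS (c - e).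
Proof. by rewrite /edist /enorm ler_sqrt //; apply: SS_ge0. Qed.

Lemma SS_tri (w v : pt) : SS w <= 2 * SS (w - v) + 2 * SS v.
Proof.
rewrite /SS !mulr_sumr -big_split /=; apply: ler_sum => i _.
rewrite !mxE; set a := w ord0 i; set b := v ord0 i; have := sqr_ge0 (a - 2 * b); nra.
Qed.

Lemma SS_max (v : pt) (m : R) : (forall i, `|v ord0 i| <= m) -> SS v <= m ^+ 2 * d%:R.
Proof.
move=> H; rewrite /SS.
have -> : m ^+ 2 * d%:R = \sum_(i < d) m ^+ 2 by rewrite sumr_const card_ord mulr_natr.
apply: ler_sum => i _; rewrite -real_normK ?num_real //.
have := H i; have := normr_ge0 (v ord0 i); set a := `|v ord0 i|; nra.
Qed.
End Aux.

Theorem lemma9p3 (R : realType) (d : nat) (xi : set 'rV[R]_d) (l : R) :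
  Npol xi -> xi 0 -> 0 < l ->
  (forall z, Iset z -> exists y, xi y /\ cube l z y) ->
  fund_region 0 xi `<=` ball0 (6 * l * (d%:R ^+ 2)).
Proof.
move=> _ xi0 lpos Hcube w [v [[Vv _] Hwv]].
rewrite /ball0 /= /enorm.
have H6 : 0 <= 6 * l * d%:R ^+ 2 by apply: mulr_ge0; [lra | apply: sqr_ge0].
rewrite -(ger0_norm H6) -sqrtr_sqr ler_sqrt; last by apply: sqr_ge0.
have Hw : SS w <= 4 * SS v.
  have := SS_tri w v; have := edist_le Hwv; rewrite subr0; lra.
suff Hv : SS v <= 9 * l ^+ 2 * d%:R ^+ 4.
  rewrite -/(SS w); lra.
case: (posnP d) => [d0|dpos].
  by rewrite /SS; subst d; rewrite big_ord0; apply: mulr_ge0; [apply: mulr_ge0; [lra|apply: sqr_ge0] | apply: exprn_ge0].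
have D1 : 1 <= (d%:R : R) by rewrite ler1n.
pose i0 : 'I_d := Ordinal dpos.
case: (@arg_maxP _ R _ i0 predT (fun i => `|v ord0 i|) isT) => j _ Hj.
set m := `|v ord0 j|.
have Hm : forall i, `|v ord0 i| <= m by move=> i; exact: Hj.
pose z : 'rV[int]_d := \row_i (if i == j then (if 0 <= v ord0 j then d%:Z else - d%:Z) else 0).
have Iz : Iset z.
  rewrite /Iset /supnormZ /= (bigD1 j) //= big1 ?maxn0.
    by rewrite mxE eqxx; case: ifP => _ //; rewrite abszN.
  by move=> i /negbTE ij; rewrite mxE ij.
have [y [xy cy]] := Hcube z Iz.
have Hvy := edist_le (Vv y xy); rewrite subr0 in Hvy.
set D : R := d%:R in D1 H6 *.
pose g (i : 'I_d) : R := (if i == j then 2 * m * (D * l) - (D * l + l / 2) ^+ 2 else 0) - (m * l + l ^+ 2 / 4).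
have m0 : 0 <= m by apply: normr_ge0.
have Dl0 : 0 <= D * l by apply: mulr_ge0; lra.
have key : forall i, g i <= (v ord0 i) ^+ 2 - ((v - y) ord0 i) ^+ 2.
  move=> i; rewrite /g !mxE; have := cy i; rewrite mxE; have := Hm i.
  case: eqP => [->|_].
    case: ifP => s; rewrite ?mulrNz -?pmulrn -/D => _; rewrite ler_norml => /andP [h1 h2].
      have vm : v ord0 j = m by rewrite /m ger0_norm.
      rewrite vm; set a := y ord0 j in h1 h2 *; set E := D * l in h1 h2 Dl0 *.
      have p1 : 0 <= m * (a - (E - l / 2)) by apply: mulr_ge0 => //; lra.
      have p2 : 0 <= (E + l / 2 - a) * (E + l / 2 + a) by apply: mulr_ge0; lra.
      nra.
    have vm : v ord0 j = - m by rewrite /m ltr0_norm ?opprK // ltNge s.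
    rewrite vm ?mulNr; rewrite ?mulNr in h1 h2.
    set a := y ord0 j in h1 h2 *; set E := D * l in h1 h2 Dl0 *.
    have p1 : 0 <= m * (- a - (E - l / 2)) by apply: mulr_ge0 => //; lra.
    have p2 : 0 <= (E + l / 2 - a) * (E + l / 2 + a) by apply: mulr_ge0; lra.
    nra.
  rewrite mul0r subr0 => h0; rewrite ler_norml => /andP [h1 h2].
  move: h0; rewrite ler_norml => /andP [h3 h4].
  set a := y ord0 i in h1 h2 *; set b := v ord0 i in h3 h4 *.
  have p1 : 0 <= (m + b) * (l / 2 + a) by apply: mulr_ge0; lra.
  have p2 : 0 <= (m - b) * (l / 2 - a) by apply: mulr_ge0; lra.
  have p3 : 0 <= (l / 2 - a) * (l / 2 + a) by apply: mulr_ge0; lra.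
  nra.
have Hsum : \sum_i g i <= SS v - SS (v - y).
  by rewrite /SS -sumrB; apply: ler_sum => i _; exact: key i.
have Eg : \sum_i g i = (2 * m * (D * l) - (D * l + l / 2) ^+ 2) - (m * l + l ^+ 2 / 4) * D.
  rewrite /g sumrB -big_mkcond big_pred1_eq sumr_const card_ord mulr_natr //.
rewrite Eg in Hsum.
have El : 0 < D * l by apply: mulr_gt0; lra.
set E := D * l in Hsum El.
have HE : E = D * l by [].
have q : 0 <= l ^+ 2 * ((D - 1) * (2 * D + 3 / 4)) by apply: mulr_ge0; [apply: sqr_ge0 | apply: mulr_ge0; lra].
have hmE : m * E <= 3 * E ^+ 2.
  have := SS_ge0 (v - y); rewrite HE in Hsum *; nra.
have hm : m <= 3 * E by nra.
have := SS_max Hm; rewrite -/D => hv.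
have hm2 : m ^+ 2 <= 9 * E ^+ 2 by nra.
rewrite HE in hm2.
have q2 : 0 <= l ^+ 2 * D ^+ 3 * (D - 1) by apply: mulr_ge0; [apply: mulr_ge0; [apply: sqr_ge0|apply: exprn_ge0; lra] | lra].
nra.
Qed.
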